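(* Let $\tau$ be a permutation. Let $M_{\tau,top}$ (resp. $M_{\tau,bottom}$) be the quasi-permutation matrix obtained by adding a row of $0$ entries above (resp. below) the permutation matrix of $\tau$, and let $M_{\tau,right}$ (resp. $M_{\tau,left}$) be the matrix obtained by adding a column of $0$ entries to the right (resp. left) of the permutation matrix of $\tau$. Then the permutations of $Av_{\mathfrak{S}}(M_{\tau,top})$ (resp. $Av_{\mathfrak{S}}(M_{\tau,bottom})$, $Av_{\mathfrak{S}}(M_{\tau,right})$, $Av_{\mathfrak{S}}(M_{\tau,left})$) are exactly the permutations obtained from a permutation avoiding $\tau$ by adding a maximal (resp. minimal, resp. last, resp. first) element.
   Context: A permutation $\sigma$ of $\{1,\dots,n\}$ is identified with its permutation matrix $M_\sigma$, with $M_\sigma(i,j)=1$ iff $i=\sigma(j)$ and rows numbered from bottom to top (so ''above'' means larger values and ''right'' means larger positions). A matrix is a submatrix of another if obtained by deleting rows and/or columns. A permutation $\sigma$ contains $\pi$ as a pattern iff $M_\pi$ is a submatrix of $M_\sigma$; $\sigma$ avoids $\tau$ otherwise. $Av_{\mathfrak{S}}(M)$ is the set of permutations whose matrix has no submatrix equal to $M$. Adding a maximal element to a permutation $\sigma'$ of size $n$ means forming a permutation of size $n+1$ whose matrix is obtained from $M_{\sigma'}$ by inserting a new top row and a new column (anywhere) with a $1$ at their intersection; adding a minimal, last, or first element is defined analogously (new bottom row, new rightmost column, new leftmost column respectively). *)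

(* Defs.v *)
From mathcomp Require Import all_boot all_algebra all_fingroup.
Set Implicit Arguments. Unset Strict Implicit. Unset Printing Implicit Defensive.

(* Matrices are 0/1 matrices 'M[bool]_(m,n); row index i (0 = bottom row,
   larger = higher), column index j (0 = leftmost). *)

Definition pmx n (s : 'S_n) : 'M[bool]_(n, n) := \matrix_(i, j) (i == s j).

Definition submx_of p q m n (A : 'M[bool]_(p, q)) (M : 'M[bool]_(m, n)) : Prop :=
  exists (f : 'I_p -> 'I_m) (g : 'I_q -> 'I_n),
    (forall i i' : 'I_p, i < i' -> f i < f i') /\
    (forall j j' : 'I_q, j < j' -> g j < g j') /\
    (forall i j, A i j = M (f i) (g j)).

Definition avoids_mx p q n (A : 'M[bool]_(p, q)) (s : 'S_n) : Prop :=
  ~ submx_of A (pmx s).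

Definition avoids k n (t : 'S_k) (s : 'S_n) : Prop := avoids_mx (pmx t) s.

Definition mx_top k (t : 'S_k) : 'M[bool]_(k.+1, k) :=
  \matrix_(i, j) match unlift ord_max i with Some i' => pmx t i' j | None => false end.
Definition mx_bottom k (t : 'S_k) : 'M[bool]_(k.+1, k) :=
  \matrix_(i, j) match unlift ord0 i with Some i' => pmx t i' j | None => false end.
Definition mx_right k (t : 'S_k) : 'M[bool]_(k, k.+1) :=
  \matrix_(i, j) match unlift ord_max j with Some j' => pmx t i j' | None => false end.
Definition mx_left k (t : 'S_k) : 'M[bool]_(k, k.+1) :=
  \matrix_(i, j) match unlift ord0 j with Some j' => pmx t i j' | None => false end.

Definition ins_rc n (r c : 'I_n.+1) (M : 'M[bool]_(n, n)) : 'M[bool]_(n.+1, n.+1) :=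
  \matrix_(i, j) match unlift r i, unlift c j with
                 | Some i', Some j' => M i' j'
                 | None, None => true
                 | _, _ => false
                 end.

Definition add_max n (s' : 'S_n) (s : 'S_n.+1) : Prop :=
  exists c : 'I_n.+1, pmx s = ins_rc ord_max c (pmx s').
Definition add_min n (s' : 'S_n) (s : 'S_n.+1) : Prop :=
  exists c : 'I_n.+1, pmx s = ins_rc ord0 c (pmx s').
Definition add_last n (s' : 'S_n) (s : 'S_n.+1) : Prop :=
  exists r : 'I_n.+1, pmx s = ins_rc r ord_max (pmx s').
Definition add_first n (s' : 'S_n) (s : 'S_n.+1) : Prop :=
  exists r : 'I_n.+1, pmx s = ins_rc r ord0 (pmx s').

(* Main.v *)
Require Import Defs.
From mathcomp Require Import all_boot all_algebra all_fingroup zify.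
Set Implicit Arguments. Unset Strict Implicit. Unset Printing Implicit Defensive.

Definition smono m m' (f : 'I_m -> 'I_m') := forall i i' : 'I_m, i < i' -> f i < f i'.

Definition mx_row k (p : 'I_k.+1) (t : 'S_k) : 'M[bool]_(k.+1, k) :=
  \matrix_(i, j) match unlift p i with Some i' => pmx t i' j | None => false end.

Definition ext k n (p : 'I_k.+1) (r : 'I_n.+1) (f : 'I_k -> 'I_n) (i : 'I_k.+1) : 'I_n.+1 :=
  match unlift p i with Some i' => lift r (f i') | None => r end.

Lemma ltn_lift n (h : 'I_n.+1) (a b : 'I_n) : (lift h a < lift h b) = (a < b).
Proof. by rewrite /= !ltnNge leq_bump2. Qed.

Lemma ext_lift k n p r f (i : 'I_k) : @ext k n p r f (lift p i) = lift r (f i).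
Proof. by rewrite /ext liftK. Qed.
Lemma ext_p k n p r f : @ext k n p r f p = r.
Proof. by rewrite /ext unlift_none. Qed.

Lemma row_equiv k n (tau : 'S_k) (p : 'I_k.+1) (r c : 'I_n.+1) (M' : 'M[bool]_n)
  (H1 : forall F : 'I_k.+1 -> 'I_n.+1, smono F -> forall i, F (lift p i) != r)
  (H2 : forall f : 'I_k -> 'I_n, smono f -> smono (ext p r f)) :
  submx_of (mx_row p tau) (ins_rc r c M') <-> submx_of (pmx tau) M'.
Proof.
split.
- move=> [F [G [HF [HG HFG]]]].
  have EF : forall i, exists i', F (lift p i) = lift r i'.
    move=> i; case: (unliftP r (F (lift p i))) => [i' -> | E]; first by exists i'.
    by move: (H1 F HF i); rewrite E eqxx.
  have [f Ef] := fin_all_exists EF.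
  have EG : forall j, exists j', G j = lift c j'.
    move=> j; case: (unliftP c (G j)) => [j' -> | E]; first by exists j'.
    have := HFG (lift p (tau j)) j.
    by rewrite /mx_row /ins_rc !mxE liftK /pmx mxE eqxx Ef liftK E unlift_none.
  have [g Eg] := fin_all_exists EG.
  exists f, g; split; [|split].
  + move=> i i' lt; have := HF (lift p i) (lift p i').
    by rewrite !Ef !ltn_lift; apply.
  + by move=> j j' lt; have := HG _ _ lt; rewrite !Eg ltn_lift.
  + move=> i j; have := HFG (lift p i) j.
    by rewrite /mx_row /ins_rc !mxE liftK Ef Eg !liftK => <-; rewrite /pmx mxE.
- move=> [f [g [Hf [Hg Hfg]]]].
  exists (ext p r f), (fun j => lift c (g j)); split; [|split].
  + exact: H2.
  + by move=> j j' lt; rewrite ltn_lift; apply: Hg.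
  + move=> i j; rewrite /mx_row /ins_rc !mxE.
    case: (unliftP p i) => [i' -> | ->].
    * by rewrite ext_lift !liftK Hfg.
    * by rewrite ext_p unlift_none liftK.
Qed.

Definition mx_col k (q : 'I_k.+1) (t : 'S_k) : 'M[bool]_(k, k.+1) :=
  \matrix_(i, j) match unlift q j with Some j' => pmx t i j' | None => false end.

Lemma submx_tr1 p q m n (A : 'M[bool]_(p,q)) (M : 'M[bool]_(m,n)) :
  submx_of A M -> submx_of (trmx A) (trmx M).
Proof.
move=> [f [g [Hf [Hg H]]]]; exists g, f; split; [exact: Hg|split; [exact: Hf|]].
by move=> i j; rewrite !mxE.
Qed.

Lemma submx_tr p q m n (A : 'M[bool]_(p,q)) (M : 'M[bool]_(m,n)) :
  submx_of (trmx A) (trmx M) <-> submx_of A M.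
Proof.
split; last exact: submx_tr1.
by move/submx_tr1; rewrite !trmxK.
Qed.

Lemma pmx_tr n (s : 'S_n) : trmx (pmx s) = pmx s^-1.
Proof.
apply/matrixP => i j; rewrite !mxE.
by rewrite eq_sym (can2_eq (permK s) (permKV s)).
Qed.

Lemma ins_rc_tr n (r c : 'I_n.+1) (M : 'M[bool]_n) :
  trmx (ins_rc r c M) = ins_rc c r (trmx M).
Proof.
apply/matrixP => i j; rewrite !mxE.
by case: (unlift c i) => [a|]; case: (unlift r j) => [b|] //; rewrite mxE.
Qed.

Lemma mx_col_tr k (q : 'I_k.+1) (tau : 'S_k) : mx_col q tau = trmx (mx_row q tau^-1).
Proof.
apply/matrixP => i j; rewrite !mxE.
case: (unlift q j) => // j'; rewrite /pmx !mxE.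
by rewrite eq_sym (can2_eq (permK tau) (permKV tau)).
Qed.

Lemma col_equiv k n (tau : 'S_k) (q : 'I_k.+1) (r c : 'I_n.+1) (M' : 'M[bool]_n)
  (H1 : forall F : 'I_k.+1 -> 'I_n.+1, smono F -> forall i, F (lift q i) != c)
  (H2 : forall f : 'I_k -> 'I_n, smono f -> smono (ext q c f)) :
  submx_of (mx_col q tau) (ins_rc r c M') <-> submx_of (pmx tau) M'.
Proof.
rewrite mx_col_tr -[ins_rc r c M']trmxK ins_rc_tr.
apply: (iff_trans (submx_tr _ _)).
apply: (iff_trans (row_equiv _ _ _ H1 H2)).
rewrite -pmx_tr; exact: submx_tr.
Qed.

Lemma remove n (s : 'S_n.+1) (c : 'I_n.+1) :
  exists s' : 'S_n, pmx s = ins_rc (s c) c (pmx s').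
Proof.
have E : forall j : 'I_n, exists j', s (lift c j) = lift (s c) j'.
  move=> j; case: (unliftP (s c) (s (lift c j))) => [j' -> | E]; first by exists j'.
  by move/perm_inj: E => /eqP; rewrite lift_eqF.
have [f Ef] := fin_all_exists E.
have finj : injective f.
  by move=> a b /(congr1 (lift (s c))); rewrite -!Ef => /perm_inj /lift_inj.
exists (perm finj); apply/matrixP => i j; rewrite /ins_rc /pmx !mxE.
case: (unliftP (s c) i) => [i' -> | ->]; case: (unliftP c j) => [j' -> | ->].
- by rewrite ?liftK !mxE permE Ef (inj_eq lift_inj).
- by rewrite lift_eqF.
- by rewrite (inj_eq perm_inj) eq_liftF.
- by rewrite eqxx.
Qed.

Lemma H1top k n (F : 'I_k.+1 -> 'I_n.+1) : smono F -> forall i, F (lift ord_max i) != ord_max.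
Proof.
move=> HF i; have := HF (lift ord_max i) ord_max; rewrite lift_max ltn_ord => /(_ isT) lt.
by apply/eqP => E; rewrite E ltnNge leq_ord in lt.
Qed.

Lemma H1bot k n (F : 'I_k.+1 -> 'I_n.+1) : smono F -> forall i, F (lift ord0 i) != ord0.
Proof.
move=> HF i; have := HF ord0 (lift ord0 i); rewrite lift0 => /(_ isT) lt.
by apply/eqP => E; rewrite E ltn0 in lt.
Qed.

Lemma H2top k n (f : 'I_k -> 'I_n) : smono f -> smono (ext ord_max ord_max f).
Proof.
move=> Hf i i'; case: (unliftP ord_max i) => [a ->|->]; case: (unliftP ord_max i') => [b ->|->];
  rewrite ?ext_lift ?ext_p ?lift_max.
- exact: Hf.
- by move=> _; apply: ltn_ord.
- by rewrite ltnNge (ltnW (ltn_ord b)).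
- by rewrite ltnn.
Qed.

Lemma H2bot k n (f : 'I_k -> 'I_n) : smono f -> smono (ext ord0 ord0 f).
Proof.
move=> Hf i i'; case: (unliftP ord0 i) => [a ->|->]; case: (unliftP ord0 i') => [b ->|->];
  rewrite ?ext_lift ?ext_p ?lift0.
- by rewrite !ltnS; exact: Hf.
- by rewrite ltn0.
- by [].
- by rewrite ltnn.
Qed.

Lemma top_eq k n (tau : 'S_k) c (M' : 'M[bool]_n) :
  submx_of (mx_top tau) (ins_rc ord_max c M') <-> submx_of (pmx tau) M'.
Proof. exact: (row_equiv tau c M' (@H1top k n) (@H2top k n)). Qed.
Lemma bot_eq k n (tau : 'S_k) c (M' : 'M[bool]_n) :
  submx_of (mx_bottom tau) (ins_rc ord0 c M') <-> submx_of (pmx tau) M'.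
Proof. exact: (row_equiv tau c M' (@H1bot k n) (@H2bot k n)). Qed.
Lemma right_eq k n (tau : 'S_k) r (M' : 'M[bool]_n) :
  submx_of (mx_right tau) (ins_rc r ord_max M') <-> submx_of (pmx tau) M'.
Proof. exact: (col_equiv tau r M' (@H1top k n) (@H2top k n)). Qed.
Lemma left_eq k n (tau : 'S_k) r (M' : 'M[bool]_n) :
  submx_of (mx_left tau) (ins_rc r ord0 M') <-> submx_of (pmx tau) M'.
Proof. exact: (col_equiv tau r M' (@H1bot k n) (@H2bot k n)). Qed.

Theorem proposition11 (k : nat) (tau : 'S_k) :
  (forall n (s : 'S_n.+1),
      avoids_mx (mx_top tau) s <-> exists s' : 'S_n, avoids tau s' /\ add_max s' s) /\
  (forall n (s : 'S_n.+1),
      avoids_mx (mx_bottom tau) s <-> exists s' : 'S_n, avoids tau s' /\ add_min s' s) /\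
  (forall n (s : 'S_n.+1),
      avoids_mx (mx_right tau) s <-> exists s' : 'S_n, avoids tau s' /\ add_last s' s) /\
  (forall n (s : 'S_n.+1),
      avoids_mx (mx_left tau) s <-> exists s' : 'S_n, avoids tau s' /\ add_first s' s).
Proof.
split; [|split; [|split]] => n s; split.
- move=> Hav; have [s' E] := remove s ((s^-1)%g ord_max); rewrite permKV in E.
  exists s'; split; last by exists ((s^-1)%g ord_max).
  by move=> Hsub; apply: Hav; rewrite /avoids_mx E; apply/top_eq.
- move=> [s' [Hav [c E]]]; rewrite /avoids_mx E => Hsub; apply: Hav.
  exact: (top_eq _ _ _).1 Hsub.
- move=> Hav; have [s' E] := remove s ((s^-1)%g ord0); rewrite permKV in E.
  exists s'; split; last by exists ((s^-1)%g ord0).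
  by move=> Hsub; apply: Hav; rewrite /avoids_mx E; apply/bot_eq.
- move=> [s' [Hav [c E]]]; rewrite /avoids_mx E => Hsub; apply: Hav.
  exact: (bot_eq _ _ _).1 Hsub.
- move=> Hav; have [s' E] := remove s ord_max.
  exists s'; split; last by exists (s ord_max).
  by move=> Hsub; apply: Hav; rewrite /avoids_mx E; apply/right_eq.
- move=> [s' [Hav [c E]]]; rewrite /avoids_mx E => Hsub; apply: Hav.
  exact: (right_eq _ _ _).1 Hsub.
- move=> Hav; have [s' E] := remove s ord0.
  exists s'; split; last by exists (s ord0).
  by move=> Hsub; apply: Hav; rewrite /avoids_mx E; apply/left_eq.
- move=> [s' [Hav [c E]]]; rewrite /avoids_mx E => Hsub; apply: Hav.
  exact: (left_eq _ _ _).1 Hsub.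
Qed.
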